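(* Let $\lambda,\mathfrak{g}_s,\alpha,\Sigma,Z_1(T)$ and $\bar W(X)=(X-\alpha)\sqrt{(X+\alpha)^2-2\mathfrak{g}_s/\alpha}$ be as below. For $X>\alpha$ let $Z_{1,X}(T)=Z_1\big(T+Z_1^{-1}(X)\big)$ for $T\ge0$, where $Z_1^{-1}$ is the inverse of the strictly decreasing bijection $Z_1:(0,\infty)\to(\alpha,\infty)$, and for $Y>0$ define $$G(X,Y;T)=\frac{Z_{1,X}'(T)}{Z_{1,X}'(0)}\cdot\frac{1}{Y+Z_{1,X}(T)}.$$ Then $G(X,Y;0)=\frac{1}{X+Y}$, $G$ satisfies $$\frac{\partial}{\partial T}G(X,Y;T)=-\frac{\partial}{\partial X}\Big(\bar W(X)\,G(X,Y;T)\Big),$$ and $$\lim_{Y\to\infty}Y\int_0^\infty G(X,Y;T)\,dT=\frac{\alpha-X}{Z_1'(Z_1^{-1}(X))}=\frac{1}{\sqrt{(X+\alpha)^2-2\mathfrak{g}_s/\alpha}}.$$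
   Context: Standing assumptions: $\lambda,\mathfrak{g}_s>0$, $\alpha$ is a positive real root of $\alpha^3-\lambda\alpha+\mathfrak{g}_s=0$ with $2\alpha^3>\mathfrak{g}_s$, $\Sigma=\tfrac12\sqrt{4\alpha^2-2\mathfrak{g}_s/\alpha}>0$, and $Z_1(T)=\alpha+\dfrac{\Sigma^2}{\sinh(\Sigma T)[\Sigma\cosh(\Sigma T)+\alpha\sinh(\Sigma T)]}$ for $T>0$. Primes denote derivatives in $T$. $G$ is the continuum loop propagator of generalized CDT and the limit is the (marked) cap function. *)

(* Defs.v *)
From Stdlib Require Import Reals Lra ClassicalEpsilon.
Open Scope R_scope.

Definition Sigma (gs alpha : R) : R := / 2 * sqrt (4 * alpha ^ 2 - 2 * gs / alpha).

Definition Z1 (gs alpha : R) (T : R) : R :=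
  let S := Sigma gs alpha in
  alpha + S ^ 2 / (sinh (S * T) * (S * cosh (S * T) + alpha * sinh (S * T))).

(* Z_1^{-1}(X): the (unique) T > 0 with Z_1(T) = X (chosen by Hilbert epsilon;
   existence/uniqueness for X > alpha is part of what must be proved). *)
Definition Z1inv (gs alpha : R) (X : R) : R :=
  epsilon (inhabits 0) (fun T => 0 < T /\ Z1 gs alpha T = X).

Definition Z1X (gs alpha X T : R) : R := Z1 gs alpha (T + Z1inv gs alpha X).

(* G(X,Y;T), with dZ1 standing for the derivative Z_1' (so Z_{1,X}'(T) = dZ1 (T + Z_1^{-1}(X))). *)
Definition Gprop (gs alpha : R) (dZ1 : R -> R) (X Y T : R) : R :=
  dZ1 (T + Z1inv gs alpha X) / dZ1 (Z1inv gs alpha X) * / (Y + Z1X gs alpha X T).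

Definition Wbar (gs alpha X : R) : R :=
  (X - alpha) * sqrt ((X + alpha) ^ 2 - 2 * gs / alpha).

Definition improper_int_0_infty (f : R -> R) (L : R) : Prop :=
  (forall b, 0 <= b -> exists pr : Riemann_integrable f 0 b, True) /\
  (forall eps, 0 < eps -> exists M, forall b (pr : Riemann_integrable f 0 b),
       M <= b -> Rabs (RiemannInt pr - L) < eps).

Definition lim_infty (h : R -> R) (L : R) : Prop :=
  forall eps, 0 < eps -> exists M, forall Y, M < Y -> Rabs (h Y - L) < eps.

(* Main.v *)
Require Import Defs.
From Stdlib Require Import Reals Lra Psatz Ranalysis5 Rpower ClassicalEpsilon.
From Coquelicot Require Import Coquelicot.
Open Scope R_scope.
Definition Df (S a t : R) := sinh (S*t) * (S * cosh (S*t) + a * sinh (S*t)).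
Definition Ef (S a t : R) := S * (cosh (S*t)^2 + sinh (S*t)^2) + 2*a*sinh(S*t)*cosh(S*t).
Definition Zf S a t := a + S^2 / Df S a t.
Definition Lz S a t := - S^2 * (S * Ef S a t) / (Df S a t)^2.

Lemma exp_gt1 x : 0 < x -> 1 < exp x /\ / exp x < 1.
Proof. intros H. rewrite <- exp_Ropp. rewrite <- exp_0. split; apply exp_increasing; lra. Qed.

Lemma sinh_pos x : 0 < x -> 0 < sinh x.
Proof. intros H. unfold sinh. rewrite exp_Ropp. destruct (exp_gt1 x H). lra. Qed.

Lemma cosh_pos x : 0 < cosh x.
Proof. unfold cosh. generalize (exp_pos x) (exp_pos (-x)). lra. Qed.

Lemma sinh_ge x : 0 <= x -> x / 2 <= sinh x.
Proof. intros H. unfold sinh. rewrite exp_Ropp.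
  generalize (exp_ineq1_le x). intros H1.
  assert (/ exp x <= 1). { destruct (Req_dec x 0). subst. rewrite exp_0. lra.
    destruct (exp_gt1 x) ; lra. }
  lra. Qed.

Lemma Df_pos S a t : 0 < S -> 0 < a -> 0 < t -> 0 < Df S a t.
Proof. intros. unfold Df. assert (0 < S*t) by nra. generalize (sinh_pos _ H2) (cosh_pos (S*t)). intros.
  apply Rmult_lt_0_compat. lra. apply Rplus_lt_0_compat; apply Rmult_lt_0_compat; lra. Qed.

Lemma Ef_pos S a t : 0 < S -> 0 < a -> 0 < t -> 0 < Ef S a t.
Proof. intros. unfold Ef. assert (0 < S*t) by nra. generalize (sinh_pos _ H2) (cosh_pos (S*t)). intros.
  assert (0 < cosh (S*t)^2 + sinh (S*t)^2) by nra.
  assert (0 < 2*a*sinh (S*t) * cosh (S*t)). { apply Rmult_lt_0_compat; try lra. apply Rmult_lt_0_compat; lra. }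
  nra. Qed.

Lemma Df_lower S a t : 0 < S -> 0 < a -> 0 <= t -> a * (S*t/2)^2 <= Df S a t.
Proof. intros. unfold Df. assert (0 <= S*t) by nra. generalize (sinh_ge _ H2) (cosh_pos (S*t)). intros.
  assert (0 <= S*t/2) by lra.
  assert ((S*t/2)^2 <= sinh (S*t) ^2) by (apply pow_incr; lra).
  assert (0 <= S * sinh (S*t) * cosh (S*t)). { apply Rmult_le_pos. apply Rmult_le_pos; lra. lra. }
  assert (a * (S*t/2)^2 <= a * sinh (S*t)^2) by (apply Rmult_le_compat_l; lra).
  assert (sinh (S * t) * (S * cosh (S * t) + a * sinh (S * t)) = S * sinh (S*t) * cosh (S*t) + a * sinh (S*t)^2) by ring.
  lra. Qed.

Lemma Df_incr S a t1 t2 : 0 < S -> 0 < a -> 0 <= t1 -> t1 < t2 -> Df S a t1 < Df S a t2.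
Proof. intros HS Ha H1 H2. unfold Df, sinh, cosh. rewrite !exp_Ropp.
  assert (E1 : 1 <= exp (S*t1)). { destruct (Req_dec t1 0). subst. rewrite Rmult_0_r, exp_0. lra.
     destruct (exp_gt1 (S*t1)); nra. }
  assert (E2 : exp (S*t1) < exp (S*t2)) by (apply exp_increasing; nra).
  generalize dependent (exp (S*t1)). generalize dependent (exp (S*t2)). intros e2 e1 E1 E2.
  assert (I1 : / e2 < / e1) by (apply Rinv_lt_contravar; nra).
  assert (I0 : 0 < / e2) by (apply Rinv_0_lt_compat; lra).
  assert (I2 : / e1 <= 1). { rewrite <- Rinv_1. apply Rinv_le_contravar; lra. }
  assert (C : e1 + / e1 <= e2 + / e2).
  { assert (e2 + / e2 - (e1 + / e1) = (e2 - e1) * (e1*e2 - 1) / (e1*e2)) by (field; lra).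
    assert (0 <= (e2 - e1) * (e1*e2 - 1) / (e1*e2)). { apply Rmult_le_pos. apply Rmult_le_pos; [lra|nra]. left; apply Rinv_0_lt_compat; nra. }
    lra. }
  set (s1 := (e1 - / e1)/2). set (s2 := (e2 - / e2)/2). set (c1 := (e1 + / e1)/2). set (c2 := (e2 + / e2)/2).
  assert (0 <= s1) by (unfold s1; lra). assert (s1 < s2) by (unfold s1, s2; lra).
  assert (c1 <= c2) by (unfold c1, c2; lra). assert (0 < c1) by (unfold c1; lra).
  assert (s1 * (S*c1 + a*s1) <= s1 * (S*c2 + a*s2)). { apply Rmult_le_compat_l. lra. nra. }
  assert (s1 * (S*c2 + a*s2) < s2 * (S*c2 + a*s2)). { apply Rmult_lt_compat_r. nra. lra. }
  lra. Qed.

Lemma Zf_der S a t : Df S a t <> 0 -> is_derive (Zf S a) t (Lz S a t).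
Proof.
intros HD.
unfold Zf, Lz, Ef. unfold Df in *. unfold sinh, cosh in *.
auto_derive.
- unfold Rdiv in HD. replace (-exp (- (S*t))) with (- exp (- (S*t))) by ring. exact HD.
- generalize dependent (exp (S*t)). generalize (exp (- (S*t))). intros f e HD.
  field. split; intro H; apply HD.
  + replace ((e - f) / 2 * (S * ((e + f) / 2) + a * ((e - f) / 2))) with
      ((e - f) / 2 * ((S * (e + f) + a * (e - f)) / 2)) by field. rewrite H. field.
  + rewrite H. field.
Qed.

Lemma Lz_ode S a t : 0 < S -> 0 < a -> 0 < t ->
  Lz S a t = - (Zf S a t - a) * sqrt ((Zf S a t + a)^2 - (4*a^2 - 4*S^2)).
Proof.
intros HS Ha Ht. generalize (Df_pos S a t HS Ha Ht) (Ef_pos S a t HS Ha Ht). intros HD HE.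
assert (Q : (Zf S a t + a)^2 - (4*a^2 - 4*S^2) = (S * Ef S a t / Df S a t)^2).
{ unfold Zf. unfold Ef, Df in *. unfold sinh, cosh in *. rewrite !exp_Ropp in *.
  assert (exp (S*t) <> 0) by (generalize (exp_pos (S*t)); lra).
  assert (1 < exp (S*t)) by (apply exp_gt1; nra).
  generalize dependent (exp (S*t)). intros e HD HE He He1.
  assert (0 < e*e-1) by nra. field. split. lra. split; apply Rgt_not_eq; [apply Rplus_lt_0_compat; apply Rmult_lt_0_compat; lra | lra]. }
rewrite Q, sqrt_pow2. unfold Lz, Zf. field. lra.
apply Rmult_le_pos. nra. left; apply Rinv_0_lt_compat; lra.
Qed.

Lemma Zf_gt S a t : 0 < S -> 0 < a -> 0 < t -> a < Zf S a t.
Proof. intros. unfold Zf. generalize (Df_pos S a t H H0 H1). intros.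
  assert (0 < S^2 / Df S a t). { apply Rdiv_lt_0_compat; nra. } lra. Qed.

Lemma Zf_decr S a t1 t2 : 0 < S -> 0 < a -> 0 < t1 -> t1 < t2 -> Zf S a t2 < Zf S a t1.
Proof. intros. unfold Zf. generalize (Df_pos S a t1 H H0 H1) (Df_incr S a t1 t2 H H0 (Rlt_le _ _ H1) H2). intros.
  assert (S^2 / Df S a t2 < S^2 / Df S a t1). { unfold Rdiv. apply Rmult_lt_compat_l. nra. apply Rinv_lt_contravar; nra. }
  lra. Qed.

Lemma Zf_inj S a t1 t2 : 0 < S -> 0 < a -> 0 < t1 -> 0 < t2 -> Zf S a t1 = Zf S a t2 -> t1 = t2.
Proof. intros. destruct (Rtotal_order t1 t2) as [h|[h|h]]; auto.
  generalize (Zf_decr S a t1 t2 H H0 H1 h); lra.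
  generalize (Zf_decr S a t2 t1 H H0 H2 h); lra. Qed.

Lemma Zf_upper S a t : 0 < S -> 0 < a -> 0 < t -> Zf S a t - a <= 4 / (a * t^2).
Proof. intros. unfold Zf. generalize (Df_lower S a t H H0 (Rlt_le _ _ H1)) (Df_pos S a t H H0 H1). intros.
  replace (4 / (a*t^2)) with (S^2 / (a * (S*t/2)^2)) by (field; lra).
  replace (a + S^2 / Df S a t - a) with (S^2 / Df S a t) by ring.
  unfold Rdiv. apply Rmult_le_compat_l. nra. apply Rinv_le_contravar. 
  apply Rmult_lt_0_compat. lra. apply pow_lt. nra. lra. Qed.

Lemma Df_0 S a : Df S a 0 = 0.
Proof. unfold Df. rewrite Rmult_0_r. unfold sinh. rewrite Ropp_0, exp_0. field. Qed.

Lemma Zf_surj S a X : 0 < S -> 0 < a -> a < X -> exists t, 0 < t /\ Zf S a t = X.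
Proof. intros HS Ha HX.
  set (w := S^2/(X-a)). assert (Hw : 0 < w) by (unfold w; apply Rdiv_lt_0_compat; nra).
  set (T2 := 1 + 4/(a*(X-a))).
  assert (H4 : 0 < 4/(a*(X-a))) by (apply Rdiv_lt_0_compat; nra).
  assert (HT2 : w < Df S a T2).
  { generalize (Df_lower S a T2 HS Ha ltac:(unfold T2; lra)). intros HL.
    assert (T2 <= T2^2) by (unfold T2; nra).
    assert (4/(a*(X-a)) * (a*(X-a)) = 4) by (field; nra).
    assert (w * (X - a) = S^2) by (unfold w; field; lra).
    assert (a * (S*T2/2)^2 = S^2 * (a * T2^2) / 4) by field.
    assert (w < S^2 * (a * T2^2) / 4).
    { apply (Rmult_lt_reg_r (X-a)). lra. rewrite H1.
      assert (4 < a*T2^2*(X-a)). { assert (4 < a*T2*(X-a)). { replace (a*T2*(X-a)) with (a*(X-a) + 4/(a*(X-a))*(a*(X-a))) by (unfold T2; ring). rewrite H0. nra. }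
        assert (a*T2*(X-a) <= a*T2^2*(X-a)). { apply Rmult_le_compat_r. lra. apply Rmult_le_compat_l; lra. } lra. }
      replace (S^2*(a*T2^2)/4*(X-a)) with (S^2 * (a*T2^2*(X-a)/4)) by field.
      rewrite <- (Rmult_1_r (S^2)) at 1. apply Rmult_lt_compat_l. nra. lra. }
    lra. }
  destruct (IVT (fun t => Df S a t - w) 0 T2) as [z [Hz1 Hz2]].
  - intro x. apply continuity_pt_filterlim. apply (ex_derive_continuous (fun t => Df S a t - w)).
    unfold Df, sinh, cosh. auto_derive. auto.
  - unfold T2; lra.
  - simpl. rewrite Df_0. lra.
  - simpl. lra.
  - exists z. assert (z <> 0). { intro. subst. rewrite Df_0 in Hz2. lra. }
    split. lra. unfold Zf. assert (Df S a z = w) by lra. rewrite H0. unfold w. field. lra.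
Qed.

Lemma Zf_cont S a t : 0 < S -> 0 < a -> 0 < t -> continuity_pt (Zf S a) t.
Proof. intros. apply continuity_pt_filterlim. apply (ex_derive_continuous (Zf S a)).
  exists (Lz S a t). apply Zf_der. generalize (Df_pos S a t H H0 H1); lra. Qed.

Lemma Lz_ex_derive S a t : 0 < S -> 0 < a -> 0 < t -> ex_derive (Lz S a) t.
Proof. intros. generalize (Df_pos S a t H H0 H1). intros HD.
  unfold Lz, Ef. unfold Df in *. unfold sinh, cosh in *. auto_derive.
  unfold Rdiv in HD. replace (-exp (- (S*t))) with (- exp (- (S*t))) by ring. 
  apply Rgt_not_eq. nra.
Qed.

Lemma dpl_ext f g x l : (forall t, f t = g t) -> derivable_pt_lim f x l -> derivable_pt_lim g x l.
Proof. intros. apply is_derive_Reals. apply (is_derive_ext f). auto. apply is_derive_Reals. auto. Qed.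

Lemma dpl_ext_loc f g x l eps : 0 < eps -> (forall t, Rabs (t - x) < eps -> f t = g t) ->
  derivable_pt_lim f x l -> derivable_pt_lim g x l.
Proof. intros. apply is_derive_Reals. apply (is_derive_ext_loc f). exists (mkposreal eps H). intros y Hy. apply H0. exact Hy.
 apply is_derive_Reals. auto. Qed.

Lemma dpl_comp f g x l1 l2 : derivable_pt_lim g x l1 -> derivable_pt_lim f (g x) l2 ->
  derivable_pt_lim (fun t => f (g t)) x (l2 * l1).
Proof. intros. apply (derivable_pt_lim_comp g f); auto. Qed.

Lemma dpl_cont f x l : derivable_pt_lim f x l -> continuity_pt f x.
Proof. intros. apply derivable_continuous_pt. exists l. exact H. Qed.

Lemma inv_deriv (Z g dZ : R -> R) (a X : R) :
 a < X ->
 (forall t, 0 < t -> derivable_pt_lim Z t (dZ t)) ->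
 (forall t1 t2, 0 < t1 -> t1 < t2 -> Z t2 < Z t1) ->
 (forall x, a < x -> 0 < g x /\ Z (g x) = x) ->
 dZ (g X) <> 0 ->
 derivable_pt_lim g X (1 / dZ (g X)).
Proof.
intros HX HD Hdec Hg HdZ.
assert (Hm : forall x1 x2, a < x1 -> x1 < x2 -> g x2 < g x1).
{ intros x1 x2 H1 H2. destruct (Hg x1 H1) as [A1 B1]. destruct (Hg x2 (Rlt_trans _ _ _ H1 H2)) as [A2 B2].
  destruct (Rtotal_order (g x2) (g x1)) as [h|[h|h]]; auto.
  - rewrite h in B2. lra.
  - generalize (Hdec _ _ A1 h). lra. }
assert (Hmw : forall x1 x2, a < x1 -> x1 <= x2 -> g x2 <= g x1).
{ intros x1 x2 H1 H2. destruct H2. left; auto. subst; lra. }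
set (f := fun t => - Z t). set (h := fun y => g (- y)).
assert (Hfd : forall t, 0 < t -> derivable_pt_lim f t (- dZ t)).
{ intros t Ht. apply (derivable_pt_lim_opp Z). auto. }
assert (Hcomp : forall y, y < - a -> comp f h y = id y).
{ intros y Hy. unfold comp, f, h, id. destruct (Hg (-y)) as [_ B]. lra. rewrite B. ring. }
assert (Hpos : forall y, y < - a -> 0 < h y). { intros y Hy. unfold h. apply Hg. lra. }
set (lb := - (X + 1)). set (ub := - ((X + a)/2)).
assert (Hcont : continuity_pt h (- X)).
{ set (lb' := g (X+1)). set (ub' := g ((X+a)/2)).
  assert (Hlb' : 0 < lb') by (apply Hg; lra).
  assert (E1 : f lb' = - (X+1)). { unfold f, lb'. destruct (Hg (X+1)) as [_ B]. lra. rewrite B; ring. }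
  assert (E2 : f ub' = - ((X+a)/2)). { unfold f, ub'. destruct (Hg ((X+a)/2)) as [_ B]. lra. rewrite B; ring. }
  apply (continuity_pt_recip_interv f h lb' ub').
  - unfold lb', ub'. apply Hm; lra.
  - intros x y Hx Hxy Hy. unfold f. apply Ropp_lt_contravar. apply Hdec; lra.
  - intros x Hx1 Hx2. apply Hcomp. lra.
  - intros x Hx1 Hx2. rewrite E1 in Hx1. rewrite E2 in Hx2. unfold h, lb', ub'. split; apply Hmw; lra.
  - intros t Ht. apply dpl_cont with (- dZ t). apply Hfd. lra.
  - rewrite E1, E2. lra. }
assert (Prf : forall t, h lb <= t <= h ub -> derivable_pt f t).
{ intros t Ht. exists (- dZ t). apply Hfd. assert (0 < h lb) by (apply Hpos; unfold lb; lra). lra. }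
assert (Hinc : h lb <= h (-X) <= h ub).
{ unfold h, lb, ub. rewrite !Ropp_involutive. split; apply Hmw; lra. }
assert (Hder : derive_pt f (h (-X)) (Prf (h (-X)) Hinc) = - dZ (g X)).
{ apply derive_pt_eq_0. unfold h. rewrite Ropp_involutive. apply Hfd. apply Hg; lra. }
assert (R1 := derivable_pt_lim_recip_interv f h lb ub (-X) Prf Hcont ltac:(unfold lb, ub; lra)
  ltac:(unfold lb, ub; lra) Hinc ltac:(intros; apply Hcomp; unfold ub in *; lra)
  ltac:(rewrite Hder; intro; apply HdZ; lra)).
rewrite Hder in R1.
assert (R2 := dpl_comp h (fun x => - x) X (-1) _ (derivable_pt_lim_opp _ _ _ (derivable_pt_lim_id X)) R1).
replace (1 / dZ (g X)) with (1 / - dZ (g X) * -1) by (field; auto).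
apply (dpl_ext (fun t => h (- t))). intro t. unfold h. rewrite Ropp_involutive. reflexivity. exact R2.
Qed.

Lemma Rdiv_le_0_compat' a b : 0 <= a -> 0 < b -> 0 <= a / b.
Proof. intros. unfold Rdiv. apply Rmult_le_pos. lra. left. apply Rinv_0_lt_compat. lra. Qed.

Lemma ln_le_xm1 x : 0 < x -> ln x <= x - 1.
Proof. intros. generalize (exp_ineq1_le (ln x)). rewrite exp_ln; lra. Qed.

Lemma ln_div' x y : 0 < x -> 0 < y -> ln (x / y) = ln x - ln y.
Proof. intros. unfold Rdiv. rewrite ln_mult, ln_Rinv; try lra. apply Rinv_0_lt_compat; lra. Qed.

Lemma ln_diff_bounds p q : 0 < p -> p <= q -> (q - p)/q <= ln q - ln p <= (q - p)/p.
Proof. intros Hp Hq. split.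
 - generalize (ln_le_xm1 (p/q) ltac:(apply Rdiv_lt_0_compat; lra)). rewrite ln_div' by lra.
   intros. replace ((q-p)/q) with (- (p/q - 1)) by (field; lra). lra.
 - generalize (ln_le_xm1 (q/p) ltac:(apply Rdiv_lt_0_compat; lra)). rewrite ln_div' by lra.
   intros. replace ((q-p)/p) with (q/p - 1) by (field; lra). lra.
Qed.

Lemma tail_bound a Y m z t eps : 0 < a -> 0 < Y -> 0 < m -> 0 < eps -> a < z -> 1 <= t ->
  z - a <= 4 / (a * t^2) -> 4 / (a*(Y+a)*m*eps) < t ->
  Rabs (/ (- m) * (ln (Y + z) - ln (Y + a))) < eps.
Proof. intros Ha HY Hm He Hz Ht Hb Hc.
 destruct (ln_diff_bounds (Y+a) (Y+z)) as [L1 L2]; try lra.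
 set (L := ln (Y + z) - ln (Y + a)) in *.
 assert (0 <= L). { assert (0 <= (Y+z - (Y+a))/(Y+z)) by (apply Rdiv_le_0_compat'; lra). lra. }
 replace (/ (- m) * L) with (- (L / m)) by (field; lra). rewrite Rabs_Ropp.
 rewrite Rabs_right by (apply Rle_ge, Rdiv_le_0_compat'; lra).
 apply (Rmult_lt_reg_r m); auto. unfold Rdiv. rewrite Rmult_assoc, Rinv_l, Rmult_1_r by lra.
 assert (A1 : (z - a) * (a * t^2) <= 4).
 { replace 4 with (4 / (a*t^2) * (a*t^2)) by (field; nra). apply Rmult_le_compat_r. nra. lra. }
 assert (A2 : (z - a) * (a * t) <= 4). { assert ((z-a)*(a*t) <= (z-a)*(a*t^2)). apply Rmult_le_compat_l. lra. apply Rmult_le_compat_l. lra. simpl; nra. lra. }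
 assert (A3 : L * (Y + a) <= z - a).
 { replace (z - a) with ((Y + z - (Y + a)) / (Y + a) * (Y + a)) by (field; lra). apply Rmult_le_compat_r; lra. }
 assert (A4 : 4 < a*(Y+a)*m*eps * t).
 { replace 4 with (4 / (a*(Y+a)*m*eps) * (a*(Y+a)*m*eps)) at 1 by (field; repeat split; lra).
   rewrite (Rmult_comm _ t). apply Rmult_lt_compat_r. repeat apply Rmult_lt_0_compat; lra. lra. }
 assert (A5 : L * ((Y + a) * (a * t)) <= 4).
 { rewrite <- Rmult_assoc. assert (L * (Y+a) * (a*t) <= (z-a)*(a*t)). apply Rmult_le_compat_r. nra. lra. lra. }
 assert (0 < (Y+a)*(a*t)) by (apply Rmult_lt_0_compat; nra).
 apply (Rmult_lt_reg_r ((Y+a)*(a*t))). auto. nra.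
Qed.

Definition lim_infty' (h : R -> R) (L : R) : Prop :=
  forall eps, 0 < eps -> exists M, forall Y, M < Y -> Rabs (h Y - L) < eps.

Lemma lim_part a X m : 0 < a -> a < X -> 0 < m ->
  lim_infty' (fun Y => Y * (/ (- m) * (ln (Y + a) - ln (Y + X)))) ((a - X) / (- m)).
Proof. intros Ha HX Hm eps He.
 exists ((X - a) * X / (m * eps)). intros Y HY.
 assert (0 < (X - a) * X / (m * eps)) by (apply Rdiv_lt_0_compat; nra).
 destruct (ln_diff_bounds (Y+a) (Y+X)) as [L1 L2]; try lra.
 set (L := ln (Y + X) - ln (Y + a)) in *.
 replace (Y * (/ - m * (ln (Y + a) - ln (Y + X))) - (a - X) / - m) with (- (((X - a) - Y * L) / m))
   by (unfold L; field; lra).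
 rewrite Rabs_Ropp.
 assert (B1 : Y * L <= X - a).
 { assert (Y * L <= Y * ((Y + X - (Y + a)) / (Y + a))) by (apply Rmult_le_compat_l; lra).
   assert (Y * ((Y + X - (Y + a)) / (Y + a)) <= X - a).
   { replace (Y * ((Y + X - (Y + a)) / (Y + a))) with ((X - a) * (Y / (Y + a))) by (field; lra).
     assert (Y / (Y+a) <= 1). { apply (Rmult_le_reg_r (Y+a)). lra. unfold Rdiv. rewrite Rmult_assoc, Rinv_l; lra. }
     nra. }
   lra. }
 assert (B2 : (X - a) - Y * L <= (X - a) * X / (Y + X)).
 { assert (Y * ((Y + X - (Y + a)) / (Y + X)) <= Y * L) by (apply Rmult_le_compat_l; lra).
   replace ((X - a) * X / (Y + X)) with ((X - a) - Y * ((Y + X - (Y + a)) / (Y + X))) by (field; lra). lra. }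
 rewrite Rabs_right by (apply Rle_ge, Rdiv_le_0_compat'; lra).
 assert (B3 : (X - a) * X / (Y + X) < eps * m).
 { apply (Rmult_lt_reg_r (Y + X)). lra. unfold Rdiv. rewrite Rmult_assoc, Rinv_l, Rmult_1_r by lra.
   assert ((X - a) * X < eps * m * Y).
   { apply (Rmult_lt_reg_r (/ (m*eps))). apply Rinv_0_lt_compat; nra.
     replace (eps * m * Y * / (m * eps)) with Y by (field; lra). exact HY. }
   nra. }
 apply (Rmult_lt_reg_r m); auto. unfold Rdiv. rewrite Rmult_assoc, Rinv_l, Rmult_1_r by lra. 
 unfold Rdiv in B2. lra.
Qed.

Lemma dpl_plus_const f x l c : derivable_pt_lim f x l -> derivable_pt_lim (fun t => c + f t) x l.
Proof. intros H eps He. destruct (H eps He) as [d Hd]. exists d. intros h Hh Hh'.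
 replace ((c + f (x + h) - (c + f x)) / h) with ((f (x + h) - f x) / h) by (unfold Rdiv; ring). auto. Qed.

Lemma dpl_shift f x l c : derivable_pt_lim f (x + c) l -> derivable_pt_lim (fun t => f (t + c)) x l.
Proof. intros H eps He. destruct (H eps He) as [d Hd]. exists d. intros h Hh Hh'.
 replace (x + h + c) with (x + c + h) by ring. auto. Qed.

Lemma dpl_scal f x l c : derivable_pt_lim f x l -> derivable_pt_lim (fun t => c * f t) x (c * l).
Proof. intros. apply is_derive_Reals. apply is_derive_scal. apply is_derive_Reals. auto. Qed.

Lemma dpl_opp f x l : derivable_pt_lim f x l -> derivable_pt_lim (fun t => - f t) x (- l).
Proof. intros. apply (derivable_pt_lim_opp f). auto. Qed.

Theorem mainTheorem10 (lam gs alpha : R) (dZ1 : R -> R)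
  (Hlam : 0 < lam) (Hgs : 0 < gs) (Halpha : 0 < alpha)
  (Hroot : alpha ^ 3 - lam * alpha + gs = 0)
  (Hineq : gs < 2 * alpha ^ 3)
  (HdZ1 : forall T, 0 < T -> derivable_pt_lim (Z1 gs alpha) T (dZ1 T)) :
  forall X, alpha < X ->
    (forall Y, 0 < Y -> Gprop gs alpha dZ1 X Y 0 = / (X + Y)) /\
    (forall Y T, 0 < Y -> 0 < T ->
       exists d,
         derivable_pt_lim (fun x => Wbar gs alpha x * Gprop gs alpha dZ1 x Y T) X d /\
         derivable_pt_lim (fun t => Gprop gs alpha dZ1 X Y t) T (- d)) /\
    (exists I : R -> R,
       (forall Y, 0 < Y -> improper_int_0_infty (fun T => Gprop gs alpha dZ1 X Y T) (I Y)) /\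
       lim_infty (fun Y => Y * I Y) ((alpha - X) / dZ1 (Z1inv gs alpha X)) /\
       (alpha - X) / dZ1 (Z1inv gs alpha X) = / sqrt ((X + alpha) ^ 2 - 2 * gs / alpha)).
Proof.
intros X HX.
set (S := Sigma gs alpha).
assert (Hq : 0 < 4 * alpha ^ 2 - 2 * gs / alpha).
{ assert (gs / alpha < 2 * alpha^2). { apply (Rmult_lt_reg_r alpha). lra. unfold Rdiv. rewrite Rmult_assoc, Rinv_l by lra. nra. }
  unfold Rdiv in *. lra. }
assert (HS : 0 < S). { unfold S, Sigma. apply Rmult_lt_0_compat. lra. apply sqrt_lt_R0. lra. }
assert (HK : 2 * gs / alpha = 4 * alpha^2 - 4 * S^2).
{ unfold S, Sigma. replace ((/ 2 * sqrt (4 * alpha ^ 2 - 2 * gs / alpha)) ^ 2) with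
    (/4 * (sqrt (4 * alpha ^ 2 - 2 * gs / alpha))^2) by field. rewrite pow2_sqrt by lra. field. lra. }
assert (HZ : forall t, Z1 gs alpha t = Zf S alpha t) by reflexivity.
assert (HW : forall x, Wbar gs alpha x = (x - alpha) * sqrt ((x + alpha)^2 - (4 * alpha^2 - 4 * S^2))).
{ intro x. unfold Wbar. rewrite HK. reflexivity. }
assert (HdZ : forall t, 0 < t -> dZ1 t = Lz S alpha t).
{ intros t Ht. apply (uniqueness_limite (Z1 gs alpha) t). auto.
  apply is_derive_Reals. apply Zf_der. generalize (Df_pos S alpha t HS Halpha Ht). lra. }
assert (Hode : forall t, 0 < t -> dZ1 t = - Wbar gs alpha (Z1 gs alpha t)).
{ intros t Ht. rewrite HdZ, Lz_ode, HW, HZ by auto. ring. }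
assert (Hinv : forall x, alpha < x -> 0 < Z1inv gs alpha x /\ Z1 gs alpha (Z1inv gs alpha x) = x).
{ intros x Hx. unfold Z1inv. apply epsilon_spec. destruct (Zf_surj S alpha x HS Halpha Hx) as [t Ht].
  exists t. rewrite HZ. auto. }
assert (HWpos : forall x, alpha < x -> 0 < Wbar gs alpha x).
{ intros x Hx. rewrite HW. apply Rmult_lt_0_compat. lra. apply sqrt_lt_R0. nra. }
assert (HdZinv : forall x, alpha < x -> dZ1 (Z1inv gs alpha x) = - Wbar gs alpha x).
{ intros x Hx. destruct (Hinv x Hx). rewrite Hode by auto. rewrite H0. auto. }
assert (HZgt : forall t, 0 < t -> alpha < Z1 gs alpha t). { intros. rewrite HZ. apply Zf_gt; auto. }
set (tau := Z1inv gs alpha X).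
destruct (Hinv X HX) as [Htau HZtau]. fold tau in Htau, HZtau.
set (m := Wbar gs alpha X). assert (Hm : 0 < m) by (apply HWpos; auto).
assert (Hdt : dZ1 tau = - m) by (apply HdZinv; auto).
assert (Htau' : derivable_pt_lim (Z1inv gs alpha) X (1 / dZ1 tau)).
{ apply (inv_deriv (Z1 gs alpha) (Z1inv gs alpha) dZ1 alpha X HX HdZ1).
  - intros. rewrite !HZ. apply Zf_decr; auto.
  - auto.
  - fold tau. rewrite Hdt. lra. }
assert (HdZd : forall u, 0 < u -> exists l, derivable_pt_lim dZ1 u l).
{ intros u Hu. destruct (Lz_ex_derive S alpha u HS Halpha Hu) as [l Hl]. exists l.
  apply (dpl_ext_loc (Lz S alpha) dZ1 u l u Hu).
  - intros t Ht. rewrite HdZ. auto. apply Rabs_def2 in Ht. lra.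
  - apply is_derive_Reals. auto. }
assert (HFd : forall Y u, 0 < Y -> 0 < u -> exists l,
  derivable_pt_lim (fun v => dZ1 v / (Y + Z1 gs alpha v)) u l).
{ intros Y u HY Hu. destruct (HdZd u Hu) as [l Hl].
  eexists. apply is_derive_Reals. apply is_derive_div.
  - apply is_derive_Reals. exact Hl.
  - apply is_derive_Reals. apply dpl_plus_const. auto.
  - generalize (HZgt u Hu). lra. }
split; [|split].
- intros Y HY. unfold Gprop, Z1X. fold tau. rewrite Rplus_0_l, HZtau. field. split. lra. rewrite Hdt. lra.
- intros Y T HY HT.
  destruct (HFd Y (T + tau) HY ltac:(lra)) as [Fl HFl].
  exists (- (Fl * (1 / dZ1 tau))). split.
  + apply (dpl_ext_loc (fun x => - (dZ1 (T + Z1inv gs alpha x) / (Y + Z1 gs alpha (T + Z1inv gs alpha x)))) _ _ _ (X - alpha)).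
    lra.
    * intros x Hx. apply Rabs_def2 in Hx. assert (alpha < x) by lra.
      destruct (Hinv x H) as [A1 A2].
      unfold Gprop, Z1X. rewrite HdZinv by auto.
      generalize (HWpos x H) (HZgt (T + Z1inv gs alpha x) ltac:(lra)). intros. field. lra.
    * apply dpl_opp.
      apply (dpl_comp (fun v => dZ1 v / (Y + Z1 gs alpha v)) (fun x => T + Z1inv gs alpha x)).
      apply dpl_plus_const. exact Htau'. exact HFl.
  + apply (dpl_ext (fun t => / dZ1 tau * (dZ1 (t + tau) / (Y + Z1 gs alpha (t + tau))))).
    * intros t. unfold Gprop, Z1X. fold tau. unfold Rdiv. ring.
    * replace (- - (Fl * (1 / dZ1 tau))) with (/ dZ1 tau * Fl) by (field; rewrite Hdt; lra).
      apply dpl_scal. apply (dpl_shift (fun v => dZ1 v / (Y + Z1 gs alpha v)) T Fl tau). exact HFl.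
- exists (fun Y => / dZ1 tau * (ln (Y + alpha) - ln (Y + X))).
  split; [|split].
  + intros Y HY.
    set (G := fun T => Gprop gs alpha dZ1 X Y T).
    set (P := fun t => / dZ1 tau * ln (Y + Z1 gs alpha (t + tau))).
    assert (HGd : forall t, 0 <= t -> derivable_pt_lim P t (G t)).
    { intros t Ht.
      assert (Hu: 0 < t + tau) by lra.
      assert (H1 : derivable_pt_lim (fun t => Y + Z1 gs alpha (t + tau)) t (dZ1 (t + tau))).
      { apply (dpl_plus_const (fun t => Z1 gs alpha (t + tau))). apply (dpl_shift (Z1 gs alpha) t _ tau). apply HdZ1. lra. }
      assert (Hp : 0 < Y + Z1 gs alpha (t + tau)) by (generalize (HZgt _ Hu); lra).
      assert (H2 := dpl_comp ln (fun t => Y + Z1 gs alpha (t + tau)) t _ _ H1 (derivable_pt_lim_ln _ Hp)).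
      assert (H3 := dpl_scal _ _ _ (/ dZ1 tau) H2).
      replace (G t) with (/ dZ1 tau * (/ (Y + Z1 gs alpha (t + tau)) * dZ1 (t + tau))).
      exact H3.
      unfold G, Gprop, Z1X. fold tau. unfold Rdiv; ring. }
    assert (HGc : forall t, 0 <= t -> continuity_pt G t).
    { intros t Ht. destruct (HFd Y (t + tau) HY ltac:(lra)) as [Fl HFl].
      apply (dpl_cont G t (/ dZ1 tau * Fl)).
      apply (dpl_ext (fun t => / dZ1 tau * (dZ1 (t + tau) / (Y + Z1 gs alpha (t + tau))))).
      intros s. unfold G, Gprop, Z1X. fold tau. unfold Rdiv. ring.
      apply dpl_scal. apply (dpl_shift (fun v => dZ1 v / (Y + Z1 gs alpha v)) t Fl tau). exact HFl. }
    assert (Hint : forall b (pr : Riemann_integrable G 0 b), 0 <= b -> RiemannInt pr = P b - P 0).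
    { intros b pr Hb. rewrite <- (RInt_Reals G 0 b pr). apply is_RInt_unique.
      apply (is_RInt_derive P G).
      - intros x Hx. rewrite Rmin_left, Rmax_right in Hx by lra. apply is_derive_Reals. apply HGd. lra.
      - intros x Hx. rewrite Rmin_left, Rmax_right in Hx by lra. apply continuity_pt_filterlim. apply HGc. lra. }
    split.
    * intros b Hb. exists (@continuity_implies_RiemannInt G 0 b Hb (fun x Hx => HGc x (proj1 Hx))). trivial.
    * intros eps He. exists (1 + 4/(alpha*(Y+alpha)*m*eps)). intros b pr Hb.
      assert (0 < 4/(alpha*(Y+alpha)*m*eps)). { apply Rdiv_lt_0_compat. lra. apply Rmult_lt_0_compat. apply Rmult_lt_0_compat. apply Rmult_lt_0_compat. lra. lra. lra. lra. }
      rewrite Hint by lra. unfold P. rewrite Rplus_0_l, HZtau.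
      replace (/ dZ1 tau * ln (Y + Z1 gs alpha (b + tau)) - / dZ1 tau * ln (Y + X) -
         / dZ1 tau * (ln (Y + alpha) - ln (Y + X))) with
         (/ (- m) * (ln (Y + Z1 gs alpha (b+tau)) - ln (Y + alpha))) by (rewrite Hdt; ring).
      apply tail_bound with (t := b + tau); auto; try lra.
      -- apply HZgt. lra.
      -- rewrite HZ. apply Zf_upper; auto; lra.
  + intros eps He. destruct (lim_part alpha X m Halpha HX Hm eps He) as [M HM].
    exists M. intros Y HYM. rewrite Hdt. apply HM. auto.
  + rewrite Hdt. unfold m. rewrite HW. rewrite HK.
    assert (0 < sqrt ((X + alpha) ^ 2 - (4 * alpha ^ 2 - 4 * S ^ 2))) by (apply sqrt_lt_R0; nra).
    field. lra.
Qed.
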